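(* Let $\mathcal{X}_1,\mathcal{X}_2$ be non-empty sets, $\mathcal{B}_1\subseteq\mathcal{P}(\mathcal{X}_1)\setminus\{\emptyset\}$, $\mathcal{B}_2\subseteq\mathcal{P}(\mathcal{X}_2)\setminus\{\emptyset\}$, and for $i\in\{1,2\}$ let $\underline{P}_i$ be a coherent conditional lower prevision on $\mathcal{C}_i\subseteq\mathcal{C}(\mathcal{X}_i)$ with natural extension $\underline{E}_i$ to $\mathcal{C}(\mathcal{X}_i)$. Let $\{i,j\}=\{1,2\}$. Then for any $f\in\mathcal{G}(\mathcal{X}_i)$, any $h\in\mathcal{G}(\mathcal{X}_j)$ and any $\mathcal{B}_i$-measurable $g\in\mathcal{G}_{\geq0}(\mathcal{X}_i)$, $$(\underline{P}_1\otimes\underline{P}_2)(f+gh)=\underline{E}_i\big(f+g\,\underline{E}_j(h)\big).$$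
   Context: Gambles on a non-empty set $\mathcal{X}$ are bounded real functions; $\mathcal{G}(\mathcal{X})$, $\mathcal{G}_{\geq0}(\mathcal{X})$, $\mathcal{G}_{>0}(\mathcal{X})$ denote all gambles, non-negative gambles, non-negative non-zero gambles. For $\mathcal{A}\subseteq\mathcal{G}(\mathcal{X})$: $\mathrm{posi}(\mathcal{A}):=\{\sum_{i=1}^n\lambda_if_i\colon n\in\mathbb{N},\lambda_i>0,f_i\in\mathcal{A}\}$, $\mathcal{E}(\mathcal{A}):=\mathrm{posi}(\mathcal{A}\cup\mathcal{G}_{>0}(\mathcal{X}))$. A coherent set of desirable gambles $\mathcal{D}\subseteq\mathcal{G}(\mathcal{X})$ satisfies: (D1) $f\geq0,f\neq0\Rightarrow f\in\mathcal{D}$; (D2) $f\in\mathcal{D},\lambda>0\Rightarrow\lambda f\in\mathcal{D}$; (D3) $f,g\in\mathcal{D}\Rightarrow f+g\in\mathcal{D}$; (D4) $f\leq0\Rightarrow f\notin\mathcal{D}$. $\mathcal{C}(\mathcal{X}):=\mathcal{G}(\mathcal{X})\times(\mathcal{P}(\mathcal{X})\setminus\{\emptyset\})$; a conditional lower prevision on $\mathcal{C}\subseteq\mathcal{C}(\mathcal{X})$ is a map $(f,B)\mapsto\underline{P}(f\vert B)\in\mathbb{R}\cup\{\pm\infty\}$. For $\mathcal{D}\subseteq\mathcal{G}(\mathcal{X})$, $\underline{P}_{\mathcal{D}}(f\vert B):=\sup\{\mu\in\mathbb{R}\colon[f-\mu]\mathbb{I}_B\in\mathcal{D}\}$. $\underline{P}$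 is coherent if $\underline{P}=\underline{P}_{\mathcal{D}}$ on its domain for some coherent set of desirable gambles $\mathcal{D}$. For coherent $\underline{P}$ on $\mathcal{C}$, $\mathcal{E}(\underline{P}):=\mathcal{E}(\{[f-\mu]\mathbb{I}_B\colon(f,B)\in\mathcal{C},\mu<\underline{P}(f\vert B)\})$ and its natural extension is $\underline{E}(f\vert B):=\underline{P}_{\mathcal{E}(\underline{P})}(f\vert B)$ for all $(f,B)\in\mathcal{C}(\mathcal{X})$. Unconditional notation: $\underline{P}(f):=\underline{P}(f\vert\mathcal{X})$. Gambles on $\mathcal{X}_i$ are identified with their cylindrical extensions to $\mathcal{X}_1\times\mathcal{X}_2$, events $B\subseteq\mathcal{X}_1$ with $B\times\mathcal{X}_2$ (similarly for $\mathcal{X}_2$). For coherent sets of desirable gambles $\mathcal{D}_1,\mathcal{D}_2$: $\mathcal{D}_1\otimes\mathcal{D}_2:=\mathcal{E}(\mathcal{A}_{1\to2}\cup\mathcal{A}_{2\to1})$, $\mathcal{A}_{1\to2}:=\{f_2(X_2)\mathbb{I}_{B_1}(X_1)\colon f_2\in\mathcal{D}_2,B_1\in\mathcal{B}_1\cup\{\mathcal{X}_1\}\}$, $\mathcal{A}_{2\to1}:=\{f_1(X_1)\mathbb{I}_{B_2}(X_2)\colon f_1\in\mathcal{D}_1,B_2\in\mathcal{B}_2\cup\{\mathcal{X}_2\}\}$. Then $(\underline{P}_1\otimes\underline{P}_2)(f\vert B):=\underline{P}_{\mathcal{D}}(f\vert B)$ for $(f,B)\in\mathcal{C}(\mathcal{X}_1\times\mathcal{X}_2)$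 with $\mathcal{D}=\mathcal{E}(\underline{P}_1)\otimes\mathcal{E}(\underline{P}_2)$. Measurability: for $\mathcal{B}\subseteq\mathcal{P}(\mathcal{X})\setminus\{\emptyset\}$, $g\in\mathcal{G}_{\geq0}(\mathcal{X})$ is simple $\mathcal{B}$-measurable if $g=c_0+\sum_{k=1}^nc_k\mathbb{I}_{B_k}$ for some $n\in\mathbb{N}\cup\{0\}$, $c_0,\dots,c_n\geq0$, $B_k\in\mathcal{B}$; $g\in\mathcal{G}_{\geq0}(\mathcal{X})$ is $\mathcal{B}$-measurable if there is a sequence of simple $\mathcal{B}$-measurable $g_n\in\mathcal{G}_{\geq0}(\mathcal{X})$ with $\sup|g-g_n|\to0$. *)

(* Defs.v *)
From Stdlib Require Import Reals Lra.
From Coquelicot Require Import Coquelicot.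
Open Scope R_scope.

(* Events are boolean predicates (classically equivalent to subsets). *)
Definition ind {X : Type} (B : X -> bool) (x : X) : R := if B x then 1 else 0.
Definition nonempty_ev {X : Type} (B : X -> bool) : Prop := exists x, B x = true.
Definition whole {X : Type} : X -> bool := fun _ => true.

Definition gamble {X : Type} (f : X -> R) : Prop := exists M, forall x, Rabs (f x) <= M.
Definition gamble_ge0 {X : Type} (f : X -> R) : Prop := gamble f /\ forall x, 0 <= f x.
Definition gamble_gt0 {X : Type} (f : X -> R) : Prop :=
  gamble_ge0 f /\ exists x, f x <> 0.

Definition posi {X : Type} (A : (X -> R) -> Prop) (g : X -> R) : Prop :=
  exists (n : nat) (lam : nat -> R) (fs : nat -> X -> R),
    (forall i, (i <= n)%nat -> 0 < lam i /\ A (fs i)) /\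
    forall x, g x = sum_f_R0 (fun i => lam i * fs i x) n.

Definition Ecl {X : Type} (A : (X -> R) -> Prop) : (X -> R) -> Prop :=
  posi (fun f => A f \/ gamble_gt0 f).

Definition coherent_D {X : Type} (D : (X -> R) -> Prop) : Prop :=
  (forall f, D f -> gamble f) /\
  (forall f, gamble_gt0 f -> D f) /\
  (forall f lam, D f -> 0 < lam -> D (fun x => lam * f x)) /\
  (forall f g, D f -> D g -> D (fun x => f x + g x)) /\
  (forall f, (forall x, f x <= 0) -> ~ D f).

(* Conditional lower prevision induced by D:
   P_D(f|B) = sup { mu in R : [f - mu] I_B in D }  (sup of empty set = -oo). *)
Definition lowP_D {X : Type} (D : (X -> R) -> Prop) (f : X -> R) (B : X -> bool) : Rbar :=
  Lub_Rbar (fun mu => D (fun x => (f x - mu) * ind B x)).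

Definition domain_ok {X : Type} (C : (X -> R) -> (X -> bool) -> Prop) : Prop :=
  forall f B, C f B -> gamble f /\ nonempty_ev B.

(* A conditional lower prevision P on C is a map; only its values on C matter. *)
Definition coherent_lp {X : Type} (C : (X -> R) -> (X -> bool) -> Prop)
  (P : (X -> R) -> (X -> bool) -> Rbar) : Prop :=
  exists D, coherent_D D /\ forall f B, C f B -> P f B = lowP_D D f B.

Definition EP {X : Type} (C : (X -> R) -> (X -> bool) -> Prop)
  (P : (X -> R) -> (X -> bool) -> Rbar) : (X -> R) -> Prop :=
  Ecl (fun g => exists f B mu, C f B /\ Rbar_lt (Finite mu) (P f B) /\
                  g = (fun x => (f x - mu) * ind B x)).

Definition natext {X : Type} (C : (X -> R) -> (X -> bool) -> Prop)
  (P : (X -> R) -> (X -> bool) -> Rbar) (f : X -> R) (B : X -> bool) : Rbar :=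
  lowP_D (EP C P) f B.

Definition A12 {X1 X2 : Type} (BB1 : (X1 -> bool) -> Prop) (D2 : (X2 -> R) -> Prop)
  (g : X1 * X2 -> R) : Prop :=
  exists f2 B1, D2 f2 /\ (BB1 B1 \/ B1 = whole) /\
    g = (fun z => f2 (snd z) * ind B1 (fst z)).
Definition A21 {X1 X2 : Type} (BB2 : (X2 -> bool) -> Prop) (D1 : (X1 -> R) -> Prop)
  (g : X1 * X2 -> R) : Prop :=
  exists f1 B2, D1 f1 /\ (BB2 B2 \/ B2 = whole) /\
    g = (fun z => f1 (fst z) * ind B2 (snd z)).
Definition prodD {X1 X2 : Type} (BB1 : (X1 -> bool) -> Prop) (BB2 : (X2 -> bool) -> Prop)
  (D1 : (X1 -> R) -> Prop) (D2 : (X2 -> R) -> Prop) : (X1 * X2 -> R) -> Prop :=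
  Ecl (fun g => A12 BB1 D2 g \/ A21 BB2 D1 g).

Definition prodP {X1 X2 : Type} (BB1 : (X1 -> bool) -> Prop) (BB2 : (X2 -> bool) -> Prop)
  (C1 : (X1 -> R) -> (X1 -> bool) -> Prop) (P1 : (X1 -> R) -> (X1 -> bool) -> Rbar)
  (C2 : (X2 -> R) -> (X2 -> bool) -> Prop) (P2 : (X2 -> R) -> (X2 -> bool) -> Rbar)
  (f : X1 * X2 -> R) (B : X1 * X2 -> bool) : Rbar :=
  lowP_D (prodD BB1 BB2 (EP C1 P1) (EP C2 P2)) f B.

Definition simple_meas {X : Type} (BB : (X -> bool) -> Prop) (g : X -> R) : Prop :=
  gamble_ge0 g /\
  exists (c0 : R) (n : nat) (c : nat -> R) (Bs : nat -> X -> bool),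
    0 <= c0 /\ (forall k, (1 <= k <= n)%nat -> 0 <= c k /\ BB (Bs k)) /\
    forall x, g x = c0 + sum_f_R0 (fun k => if (k =? 0)%nat then 0 else c k * ind (Bs k) x) n.

Definition measurable_g {X : Type} (BB : (X -> bool) -> Prop) (g : X -> R) : Prop :=
  gamble_ge0 g /\
  exists gs : nat -> X -> R, (forall m, simple_meas BB (gs m)) /\
    forall eps, 0 < eps -> exists N, forall m, (N <= m)%nat ->
      forall x, Rabs (g x - gs m x) <= eps.

(* Main.v *)
Require Import Defs.
From Stdlib Require Import Reals Lra Lia.
From Stdlib Require Import FunctionalExtensionality IndefiniteDescription Classical PropExtensionality.
From Coquelicot Require Import Coquelicot.
Require Import Defs.
Open Scope R_scope.

Lemma sum_ext (F G : nat -> R) N : (forall i, F i = G i) -> sum_f_R0 F N = sum_f_R0 G N.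
Proof. intros H; apply sum_eq; intros; apply H. Qed.

Lemma sum_scal (F : nat -> R) k N : sum_f_R0 (fun i => k * F i) N = k * sum_f_R0 F N.
Proof. induction N; simpl; [ring| rewrite IHN; ring]. Qed.

Lemma sum_opp (F : nat -> R) N : sum_f_R0 (fun i => - F i) N = - sum_f_R0 F N.
Proof. induction N; simpl; [ring| rewrite IHN; ring]. Qed.

Lemma sum_4 (F : nat -> R) n : sum_f_R0 F (S (S (S (S n)))) =
  F 0%nat + F 1%nat + F 2%nat + F 3%nat + sum_f_R0 (fun i => F (S (S (S (S i))))) n.
Proof.
  rewrite decomp_sum by lia. simpl Init.Nat.pred.
  rewrite decomp_sum by lia. simpl Init.Nat.pred.
  rewrite decomp_sum by lia. simpl Init.Nat.pred.
  rewrite decomp_sum by lia. simpl Init.Nat.pred. ring.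
Qed.

Lemma sum_delta (u : nat -> R) i n : (i <= n)%nat ->
  sum_f_R0 (fun k => (if Nat.eqb k i then 1 else 0) * u k) n = u i.
Proof.
  induction n; intros Hi.
  - assert (i = 0%nat) by lia; subst; simpl; ring.
  - destruct (Nat.eq_dec i (S n)).
    + subst. simpl. rewrite Nat.eqb_refl.
      rewrite (sum_eq _ (fun _ => 0)).
      * assert (Z : forall m, sum_f_R0 (fun _ => 0) m = 0).
        { induction m; simpl; [ring|]. rewrite IHm. ring. }
        rewrite Z. ring.
      * intros k Hk. destruct (Nat.eqb_spec k (S n)); [lia| ring].
    + cbn [sum_f_R0]. rewrite IHn by lia. destruct (Nat.eqb_spec (S n) i); [lia|ring].
Qed.

Lemma gamble_const {X} (c : R) : @gamble X (fun _ => c).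
Proof. exists (Rabs c); intros; lra. Qed.

Lemma gamble_add {X} (a b : X -> R) : gamble a -> gamble b -> gamble (fun x => a x + b x).
Proof.
  intros [Ma Ha] [Mb Hb]; exists (Ma + Mb); intros x.
  eapply Rle_trans; [apply Rabs_triang|]. specialize (Ha x); specialize (Hb x); lra.
Qed.

Lemma gamble_mul {X} (a b : X -> R) : gamble a -> gamble b -> gamble (fun x => a x * b x).
Proof.
  intros [Ma Ha] [Mb Hb]; exists (Ma * Mb); intros x.
  rewrite Rabs_mult. apply Rmult_le_compat; try apply Rabs_pos; auto.
Qed.

Lemma gamble_scal {X} (c : R) (a : X -> R) : gamble a -> gamble (fun x => c * a x).
Proof. intros; apply (gamble_mul (fun _ => c) a); auto using gamble_const. Qed.

Lemma gamble_opp {X} (a : X -> R) : gamble a -> gamble (fun x => - a x).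
Proof. intros [M H]; exists M; intros x; rewrite Rabs_Ropp; auto. Qed.

Lemma gamble_sub {X} (a b : X -> R) : gamble a -> gamble b -> gamble (fun x => a x - b x).
Proof. intros; apply gamble_add; auto; apply gamble_opp; auto. Qed.

Lemma gamble_sum {X} (F : nat -> X -> R) N : (forall i, (i <= N)%nat -> gamble (F i)) ->
  gamble (fun x => sum_f_R0 (fun i => F i x) N).
Proof.
  induction N; intros H; simpl.
  - apply H; lia.
  - apply gamble_add; [apply IHN; intros; apply H; lia| apply H; lia].
Qed.

Lemma gamble_ext {X} (a b : X -> R) : gamble a -> (forall x, a x = b x) -> gamble b.
Proof. intros H E. replace b with a; auto. apply functional_extensionality; auto. Qed.

Lemma gamble_bound {X} (a : X -> R) : gamble a -> exists M, 0 <= M /\ forall x, Rabs (a x) <= M.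
Proof.
  intros [M H]. exists (Rabs M). split; [apply Rabs_pos|].
  intros x; specialize (H x); pose proof (Rle_abs M); lra.
Qed.

Lemma ind_whole {X} (x : X) : ind whole x = 1.
Proof. reflexivity. Qed.

Lemma lub_fin (S : R -> Prop) (m M : R) : S m -> (forall x, S x -> x <= M) ->
  exists r, Lub_Rbar S = Finite r /\ (forall x, S x -> x <= r) /\
            (forall x, x < r -> exists y, S y /\ x < y).
Proof.
  intros Hm HM. destruct (Lub_Rbar_correct S) as [ub lst].
  assert (h1 : Rbar_le (Lub_Rbar S) M) by (apply lst; intros x Hx; simpl; apply HM; auto).
  assert (h2 := ub m Hm).
  destruct (Lub_Rbar S) as [r| |] eqn:E; simpl in *; try contradiction.
  exists r; split; [reflexivity|split].
  - intros x Hx; specialize (ub x Hx); simpl in ub; auto.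
  - intros x Hx. apply NNPP; intros Hn.
    assert (H : r <= x). { apply (lst (Finite x)). intros y Hy; simpl.
      apply Rnot_lt_le; intros Hl; apply Hn; exists y; auto. }
    lra.
Qed.

Lemma lub_mono (S T : R -> Prop) :
  (forall mu, S mu -> forall mu', mu' < mu -> T mu') -> Rbar_le (Lub_Rbar S) (Lub_Rbar T).
Proof.
  intros H. destruct (Lub_Rbar_correct S) as [ubS lstS].
  destruct (Lub_Rbar_correct T) as [ubT lstT].
  apply lstS. intros mu Hmu.
  destruct (Lub_Rbar T) as [l| |] eqn:E; simpl; auto.
  - apply Rnot_lt_le; intros Hl.
    specialize (ubT ((mu + l)/2) (H mu Hmu ((mu + l)/2) ltac:(lra))). simpl in ubT; lra.
  - specialize (ubT (mu - 1) (H mu Hmu (mu - 1) ltac:(lra))). simpl in ubT; auto.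
Qed.

Lemma eps_le (a b : R) : (forall eps, 0 < eps -> a - eps <= b) -> a <= b.
Proof.
  intros H. apply Rnot_lt_le; intros Hl. specialize (H ((a - b)/2) ltac:(lra)). lra.
Qed.


Definition low {X} (D : (X -> R) -> Prop) (phi : X -> R) : R := real (lowP_D D phi whole).

Lemma lowP_eq {X} (D : (X -> R) -> Prop) phi :
  lowP_D D phi whole = Lub_Rbar (fun mu => D (fun x => phi x - mu)).
Proof.
  unfold lowP_D. f_equal. apply functional_extensionality; intro mu.
  f_equal. apply functional_extensionality; intro x. rewrite ind_whole. ring.
Qed.

Lemma D_ext {X} (D : (X -> R) -> Prop) a b : D a -> (forall x, a x = b x) -> D b.
Proof. intros H E. replace b with a; auto. apply functional_extensionality; auto. Qed.

Section Coh.
Context {X : Type} (x0 : X) (D : (X -> R) -> Prop) (cD : coherent_D D).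

Lemma D_gamble (a : X -> R) : D a -> gamble a.
Proof. apply cD. Qed.
Lemma D_gt0 (a : X -> R) : gamble_gt0 a -> D a.
Proof. apply cD. Qed.
Lemma D_scal (a : X -> R) l : D a -> 0 < l -> D (fun x => l * a x).
Proof. apply cD. Qed.
Lemma D_add (a b : X -> R) : D a -> D b -> D (fun x => a x + b x).
Proof. apply cD. Qed.
Lemma D_notpos (a : X -> R) : (forall x, a x <= 0) -> ~ D a.
Proof. apply cD. Qed.

Lemma gt0_of_pos (a : X -> R) c : gamble a -> 0 < c -> (forall x, c <= a x) -> gamble_gt0 a.
Proof.
  intros g hc H. split; [split; auto|]. intros x; specialize (H x); lra.
  exists x0. specialize (H x0); lra.
Qed.

Lemma D_const c : 0 < c -> D (fun _ => c).
Proof. intros; apply D_gt0; apply (gt0_of_pos _ c); auto using gamble_const; intros; lra. Qed.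

Lemma D_add_pos (a b : X -> R) c : D a -> gamble b -> 0 < c -> (forall x, c <= b x) -> D (fun x => a x + b x).
Proof. intros; apply D_add; auto. apply D_gt0, (gt0_of_pos _ c); auto. Qed.

Lemma low_spec (phi : X -> R) : gamble phi ->
  lowP_D D phi whole = Finite (low D phi) /\
  (forall mu, D (fun x => phi x - mu) -> mu <= low D phi) /\
  (forall mu, mu < low D phi -> D (fun x => phi x - mu)).
Proof.
  intros gp. destruct (gamble_bound phi gp) as [M [HM0 HM]].
  assert (Hm : D (fun x => phi x - (- M - 1))).
  { apply D_gt0, (gt0_of_pos _ 1); [apply gamble_sub; auto using gamble_const|lra|].
    intros x; specialize (HM x). pose proof (Rle_abs (- phi x)) as h. rewrite Rabs_Ropp in h. lra. }
  assert (HMb : forall mu, D (fun x => phi x - mu) -> mu <= M).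
  { intros mu Hmu. apply Rnot_lt_le; intros Hl. refine (D_notpos _ _ Hmu).
    intros x; simpl; specialize (HM x). pose proof (Rle_abs (phi x)). lra. }
  destruct (lub_fin _ _ _ Hm HMb) as [r [E [H1 H2]]].
  unfold low. rewrite lowP_eq, E. simpl. split; [reflexivity|split; auto].
  intros mu Hmu. destruct (H2 mu Hmu) as [y [Hy Hl]].
  apply (D_ext _ (fun x => (phi x - y) + (y - mu))).
  - apply (D_add_pos _ _ (y - mu)); auto using gamble_const. lra. intros; lra.
  - intros; ring.
Qed.

Lemma low_in (phi : X -> R) mu : gamble phi -> D (fun x => phi x - mu) -> mu <= low D phi.
Proof. intros g; apply (low_spec phi g). Qed.
Lemma low_D (phi : X -> R) mu : gamble phi -> mu < low D phi -> D (fun x => phi x - mu).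
Proof. intros g; apply (low_spec phi g). Qed.

Lemma low_ge (phi : X -> R) c : gamble phi -> (forall x, c <= phi x) -> c <= low D phi.
Proof.
  intros g H. apply eps_le; intros eps He. apply low_in; auto.
  apply D_gt0, (gt0_of_pos _ eps); [apply gamble_sub; auto using gamble_const|auto|].
  intros x; specialize (H x); lra.
Qed.

Lemma low_Dpos (a : X -> R) : D a -> 0 <= low D a.
Proof.
  intros Ha. apply low_in; [apply D_gamble; auto|]. apply (D_ext _ a); auto. intros; ring.
Qed.

Lemma low_superadd (a b : X -> R) : gamble a -> gamble b ->
  low D a + low D b <= low D (fun x => a x + b x).
Proof.
  intros ga gb. apply eps_le; intros eps He.
  assert (H1 := low_D a (low D a - eps/2) ga ltac:(lra)).
  assert (H2 := low_D b (low D b - eps/2) gb ltac:(lra)).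
  replace (low D a + low D b - eps) with ((low D a - eps/2) + (low D b - eps/2)) by field.
  apply low_in; [apply gamble_add; auto|].
  apply (D_ext _ _ _ (D_add _ _ H1 H2)). intros; ring.
Qed.

Lemma low_zero : low D (fun _ => 0) = 0.
Proof.
  apply Rle_antisym.
  - apply Rnot_lt_le; intros Hl.
    assert (H := low_D (fun _ => 0) (low D (fun _ : X => 0) / 2) (gamble_const 0) ltac:(lra)).
    refine (D_notpos _ _ H). intros; simpl. lra.
  - apply low_ge; auto using gamble_const. intros; lra.
Qed.

Lemma low_hom_ge (a : X -> R) l : 0 < l -> gamble a -> l * low D a <= low D (fun x => l * a x).
Proof.
  intros hl ga. apply eps_le; intros eps He.
  assert (H := low_D a (low D a - eps / l) ga).
  assert (0 < eps / l) by (apply Rdiv_lt_0_compat; auto).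
  specialize (H ltac:(lra)).
  replace (l * low D a - eps) with (l * (low D a - eps / l)) by (field; lra).
  apply low_in; [apply gamble_scal; auto|].
  apply (D_ext _ _ _ (D_scal _ l H hl)). intros; ring.
Qed.

Lemma low_hom (a : X -> R) l : 0 <= l -> gamble a -> low D (fun x => l * a x) = l * low D a.
Proof.
  intros hl ga. destruct (Req_dec l 0) as [->|hn].
  - replace (fun x => 0 * a x) with (fun _ : X => 0).
    rewrite low_zero; ring. apply functional_extensionality; intros; ring.
  - apply Rle_antisym; [|apply low_hom_ge; auto; lra].
    assert (H := low_hom_ge (fun x => l * a x) (/ l) ltac:(apply Rinv_0_lt_compat; lra)
                  (gamble_scal _ _ ga)).
    assert (E : (fun x => / l * (l * a x)) = a).
    { apply functional_extensionality; intros; field; auto. }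
    cbv beta in H; rewrite E in H.
    apply (Rmult_le_compat_l l) in H; [|lra].
    rewrite <- Rmult_assoc, Rinv_r, Rmult_1_l in H; auto.
Qed.

Lemma low_ub (a : X -> R) c : gamble a -> (forall x, a x <= c) -> low D a <= c.
Proof.
  intros ga H. assert (H1 := low_superadd a (fun x => - a x) ga (gamble_opp _ ga)). cbv beta in H1.
  replace (fun x => a x + - a x) with (fun _ : X => 0) in H1.
  2:{ apply functional_extensionality; intros; ring. }
  rewrite low_zero in H1.
  assert (H2 := low_ge (fun x => - a x) (- c) (gamble_opp _ ga) ltac:(intros x; specialize (H x); lra)). cbv beta in H2.
  lra.
Qed.

Lemma low_mono (a b : X -> R) : gamble a -> gamble b -> (forall x, b x <= a x) ->
  low D b <= low D a.
Proof.
  intros ga gb H. assert (H1 := low_superadd b (fun x => a x - b x) gb (gamble_sub _ _ ga gb)). cbv beta in H1.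
  replace (fun x => b x + (a x - b x)) with a in H1.
  2:{ apply functional_extensionality; intros; ring. }
  assert (H2 := low_ge (fun x => a x - b x) 0 (gamble_sub _ _ ga gb) ltac:(intros x; specialize (H x); lra)). cbv beta in H2.
  lra.
Qed.

Lemma low_const_add (a : X -> R) c : gamble a -> low D (fun x => a x + c) = low D a + c.
Proof.
  intros ga. apply Rle_antisym.
  - assert (H1 := low_superadd (fun x => a x + c) (fun _ => - c) (gamble_add _ _ ga (gamble_const c)) (gamble_const _)). cbv beta in H1.
    replace (fun x => a x + c + - c) with a in H1.
    2:{ apply functional_extensionality; intros; ring. }
    assert (H2 := low_ge (fun _ : X => -c) (-c) (gamble_const _) ltac:(intros; lra)). cbv beta in H2. lra.
  - assert (H1 := low_superadd a (fun _ => c) ga (gamble_const c)). cbv beta in H1.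
    assert (H2 := low_ge (fun _ : X => c) c (gamble_const _) ltac:(intros; lra)). cbv beta in H2. lra.
Qed.

Lemma low_sum (F : nat -> X -> R) N : (forall i, (i <= N)%nat -> gamble (F i)) ->
  sum_f_R0 (fun i => low D (F i)) N <= low D (fun x => sum_f_R0 (fun i => F i x) N).
Proof.
  induction N; intros H; simpl.
  - right; f_equal.
  - eapply Rle_trans; [|apply low_superadd].
    + apply Rplus_le_compat_r. apply IHN. intros; apply H; lia.
    + apply gamble_sum; intros; apply H; lia.
    + apply H; lia.
Qed.
End Coh.


Section Posi.
Context {X : Type} (A : (X -> R) -> Prop).

Lemma posi_ext (g g' : X -> R) : posi A g -> (forall x, g x = g' x) -> posi A g'.
Proof.
  intros [n [lam [fs [H1 H2]]]] E. exists n, lam, fs; split; auto.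
  intros x; rewrite <- E; auto.
Qed.

Lemma posi_single (a : X -> R) : A a -> posi A a.
Proof.
  intros Ha. exists 0%nat, (fun _ => 1), (fun _ => a). split.
  - intros; split; auto; lra.
  - intros; simpl; ring.
Qed.

Lemma posi_scal (g : X -> R) l : posi A g -> 0 < l -> posi A (fun x => l * g x).
Proof.
  intros [n [lam [fs [H1 H2]]]] hl. exists n, (fun i => l * lam i), fs. split.
  - intros i Hi; destruct (H1 i Hi); split; auto. apply Rmult_lt_0_compat; auto.
  - intros x; rewrite H2, <- sum_scal. apply sum_ext; intros; ring.
Qed.

Lemma posi_add (g1 g2 : X -> R) : posi A g1 -> posi A g2 -> posi A (fun x => g1 x + g2 x).
Proof.
  intros [n1 [l1 [f1 [H1 E1]]]] [n2 [l2 [f2 [H2 E2]]]].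
  exists (n1 + S n2)%nat, (fun i => if Nat.leb i n1 then l1 i else l2 (i - S n1)%nat),
    (fun i => if Nat.leb i n1 then f1 i else f2 (i - S n1)%nat). split.
  - intros i Hi. destruct (Nat.leb_spec i n1); [apply H1; auto| apply H2; lia].
  - intros x. rewrite (tech2 _ n1) by lia.
    replace (n1 + S n2 - S n1)%nat with n2 by lia.
    rewrite E1, E2. f_equal.
    + apply sum_eq; intros i Hi. destruct (Nat.leb_spec i n1); [reflexivity|lia].
    + apply sum_eq; intros i Hi. destruct (Nat.leb_spec (S n1 + i) n1); [lia|].
      replace (S n1 + i - S n1)%nat with i by lia. reflexivity.
Qed.

Lemma posi_gamble (g : X -> R) : (forall a, A a -> gamble a) -> posi A g -> gamble g.
Proof.
  intros HA [n [lam [fs [H1 H2]]]].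
  apply (gamble_ext (fun x => sum_f_R0 (fun i => lam i * fs i x) n)); [|intros; auto].
  apply (gamble_sum (fun i x => lam i * fs i x)). intros i Hi.
  apply gamble_scal, HA, H1; auto.
Qed.

Lemma posi_sub (D : (X -> R) -> Prop) (g : X -> R) : coherent_D D ->
  (forall a, A a -> D a) -> posi A g -> D g.
Proof.
  intros cD HA [n [lam [fs [H1 H2]]]].
  apply (D_ext _ (fun x => sum_f_R0 (fun i => lam i * fs i x) n)); [|intros; auto].
  clear H2. induction n; simpl.
  - destruct (H1 0%nat ltac:(lia)). apply (D_scal D cD); auto.
  - apply (D_add D cD).
    + apply IHn; intros; apply H1; lia.
    + destruct (H1 (S n) ltac:(lia)). apply (D_scal D cD); auto.
Qed.

Lemma posi_add_nonneg (r a : X -> R) c : posi A r -> 0 <= c -> A a ->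
  posi A (fun x => r x + c * a x).
Proof.
  intros Hr hc Ha. destruct (Req_dec c 0) as [->|hn].
  - apply (posi_ext r); auto; intros; ring.
  - apply posi_add; auto. apply posi_scal; [apply posi_single; auto| lra].
Qed.

Lemma posi_add_terms (r : X -> R) (T : nat -> X -> R) n : posi A r ->
  (forall k, (k <= n)%nat -> (forall x, T k x = 0) \/
     exists c a, 0 <= c /\ A a /\ forall x, T k x = c * a x) ->
  posi A (fun x => r x + sum_f_R0 (fun k => T k x) n).
Proof.
  intros Hr HT. induction n; simpl.
  - destruct (HT 0%nat ltac:(lia)) as [Z|[c [a [hc [Ha E]]]]].
    + apply (posi_ext r); auto; intros; rewrite Z; ring.
    + apply (posi_ext (fun x => r x + c * a x)); [apply posi_add_nonneg; auto|].
      intros; rewrite E; ring.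
  - assert (IH : posi A (fun x => r x + sum_f_R0 (fun k => T k x) n)).
    { apply IHn; intros; apply HT; lia. }
    destruct (HT (S n) ltac:(lia)) as [Z|[c [a [hc [Ha E]]]]].
    + apply (posi_ext _ _ IH); intros; rewrite Z; ring.
    + apply (posi_ext _ _ (posi_add_nonneg _ a c IH hc Ha)); intros; rewrite E; ring.
Qed.
End Posi.

Lemma EP_coherent {X} (x0 : X) (C : (X -> R) -> (X -> bool) -> Prop) (P : (X -> R) -> (X -> bool) -> Rbar) : domain_ok C -> coherent_lp C P -> coherent_D (EP C P).
Proof.
  intros hC [D [cD HP]].
  assert (Hsub : forall g, EP C P g -> D g).
  { intros g Hg. refine (posi_sub _ D g cD _ Hg).
    intros a [[f [B [mu [HfB [Hlt ->]]]]]|Ha]; [|apply (D_gt0 D cD); auto].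
    rewrite HP in Hlt by auto. unfold lowP_D in Hlt.
    destruct (hC f B HfB) as [gf [y HB]].
    assert (Hex : exists mu'', D (fun x => (f x - mu'') * ind B x) /\ mu < mu'').
    { apply NNPP; intros Hn.
      destruct (Lub_Rbar_correct (fun mu => D (fun x => (f x - mu) * ind B x))) as [_ lst].
      assert (Hl := lst (Finite mu)). simpl in Hl.
      destruct (Lub_Rbar _) as [r| |]; simpl in *; try tauto.
      - assert (r <= mu); [|lra]. apply Hl. intros z Hz. apply Rnot_lt_le; intros Hz'.
        apply Hn; exists z; auto.
      - apply Hl. intros z Hz. apply Rnot_lt_le; intros Hz'. apply Hn; exists z; auto. }
    destruct Hex as [m2 [Hm2 Hlt2]].
    apply (D_ext _ (fun x => (f x - m2) * ind B x + (m2 - mu) * ind B x)); [|intros; ring].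
    apply (D_add D cD); auto. apply (D_gt0 D cD).
    split; [split|].
    - apply gamble_scal. exists 1; intros x; unfold ind; destruct (B x); rewrite ?Rabs_R1, ?Rabs_R0; lra.
    - intros x; unfold ind; destruct (B x); lra.
    - exists y; unfold ind; rewrite HB. lra. }
  repeat split.
  - intros g Hg. refine (posi_gamble _ g _ Hg).
    intros a [[f [B [mu [HfB [Hlt ->]]]]]|Ha]; [|apply Ha].
    destruct (hC f B HfB) as [gf _]. apply gamble_mul; [apply gamble_sub; auto using gamble_const|].
    exists 1; intros x; unfold ind; destruct (B x); rewrite ?Rabs_R1, ?Rabs_R0; lra.
  - intros g Hg. apply posi_single; right; auto.
  - intros g l Hg hl. apply posi_scal; auto.
  - intros f g Hf Hg. apply posi_add; auto.
  - intros f Hf Hd. apply (D_notpos D cD f Hf). apply Hsub; auto.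
Qed.


Lemma sum_div (t u : nat -> R) k N : k <> 0 ->
  sum_f_R0 (fun i => t i * u i) N = k * sum_f_R0 (fun i => (t i / k) * u i) N.
Proof. intros hk. rewrite <- sum_scal. apply sum_ext; intros; field; auto. Qed.

Lemma HB {X} (p : (X -> R) -> R)
  (padd : forall a b, gamble a -> gamble b -> p (fun x => a x + b x) <= p a + p b)
  (phom : forall l a, 0 <= l -> gamble a -> p (fun x => l * a x) = l * p a)
  (v : nat -> X -> R) (hv : forall i, gamble (v i)) (c0 : R)
  (h0 : forall s, s * c0 <= p (fun x => s * v 0%nat x)) :
  forall N, exists q : nat -> R, q 0%nat = c0 /\ forall t,
    sum_f_R0 (fun i => t i * q i) N <= p (fun x => sum_f_R0 (fun i => t i * v i x) N).
Proof.
  assert (gw : forall t N, gamble (fun x => sum_f_R0 (fun i => t i * v i x) N)).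
  { intros t N; apply (gamble_sum (fun i x => t i * v i x)); intros; apply gamble_scal; auto. }
  assert (pext : forall a b, (forall x, a x = b x) -> p a = p b).
  { intros a b E; f_equal; apply functional_extensionality; auto. }
  induction N.
  - exists (fun _ => c0). split; auto. intros t; simpl. apply h0.
  - destruct IHN as [q [hq0 IH]].
    set (vN := v (S N)).
    set (l := fun t => sum_f_R0 (fun i => t i * q i) N).
    set (w := fun t x => sum_f_R0 (fun i => t i * v i x) N).
    assert (gvN : gamble vN) by apply hv.
    assert (tri : forall t t', l t + l t' <= p (fun x => w t x - vN x) + p (fun x => w t' x + vN x)).
    { intros t t'.
      assert (E1 : l t + l t' = l (fun i => t i + t' i)).
      { unfold l; rewrite <- plus_sum; apply sum_ext; intros; ring. }
      rewrite E1. eapply Rle_trans; [apply IH|].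
      rewrite (pext _ (fun x => (w t x - vN x) + (w t' x + vN x))).
      - apply padd; [apply gamble_sub|apply gamble_add]; auto; apply gw.
      - intros x. unfold w.
        rewrite (sum_ext _ (fun i => t i * v i x + t' i * v i x)) by (intros; ring).
        rewrite plus_sum; ring. }
    set (Sset := fun r => exists t, r = l t - p (fun x => w t x - vN x)).
    assert (bS : bound Sset).
    { exists (p vN - l (fun _ => 0)). intros r [t ->].
      assert (H := tri t (fun _ => 0)).
      rewrite (pext (fun x => w (fun _ => 0) x + vN x) vN) in H. lra.
      intros x; unfold w. rewrite (sum_ext _ (fun i => 0 * 0)) by (intros; ring).
      rewrite (sum_scal (fun _ => 0) 0). ring. }
    assert (nS : exists r, Sset r) by (exists (l (fun _ => 0) - p (fun x => w (fun _ => 0) x - vN x)); exists (fun _ => 0); auto).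
    destruct (completeness Sset bS nS) as [c [cub clst]].
    assert (U : forall t', c <= p (fun x => w t' x + vN x) - l t').
    { intros t'. apply clst. intros r [t ->]. assert (H := tri t t'). lra. }
    assert (L : forall t, l t - p (fun x => w t x - vN x) <= c).
    { intros t. apply cub. exists t; auto. }
    exists (fun i => if Nat.eqb i (S N) then c else q i). split; [simpl; auto|].
    intros t. cbn [sum_f_R0]. rewrite Nat.eqb_refl.
    rewrite (sum_eq _ (fun i => t i * q i)).
    2:{ intros i Hi. destruct (Nat.eqb_spec i (S N)); [lia|reflexivity]. }
    fold (l t).
    rewrite (pext _ (fun x => w t x + t (S N) * vN x)) by (intros; reflexivity).
    set (s := t (S N)).
    destruct (Rtotal_order s 0) as [hs|[hs|hs]].
    + set (r := - s). assert (hr : 0 < r) by (unfold r; lra).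
      set (t' := fun i => t i / r).
      assert (El : l t = r * l t') by (unfold l, t'; apply sum_div; lra).
      assert (Ew : forall x, w t x + s * vN x = r * (w t' x - vN x)).
      { intros x. unfold w, t'. rewrite (sum_div t (fun i => v i x) r) by lra. unfold r; ring. }
      rewrite (pext _ _ Ew), phom; [|lra|apply gamble_sub; auto; apply gw].
      specialize (L t'). rewrite El.
      assert (r * (l t' - p (fun x => w t' x - vN x)) <= r * c) by (apply Rmult_le_compat_l; lra).
      unfold r in *; lra.
    + rewrite hs. rewrite (pext _ (w t)) by (intros; ring). rewrite Rmult_0_l, Rplus_0_r. apply IH.
    + set (t' := fun i => t i / s).
      assert (El : l t = s * l t') by (unfold l, t'; apply sum_div; lra).
      assert (Ew : forall x, w t x + s * vN x = s * (w t' x + vN x)).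
      { intros x. unfold w, t'. rewrite (sum_div t (fun i => v i x) s) by lra. ring. }
      rewrite (pext _ _ Ew), phom; [|lra|apply gamble_add; auto; apply gw].
      specialize (U t'). rewrite El.
      assert (s * c <= s * (p (fun x => w t' x + vN x) - l t')) by (apply Rmult_le_compat_l; lra).
      lra.
Qed.


Lemma low_ext {X} (D : (X -> R) -> Prop) a b : (forall x, a x = b x) -> low D a = low D b.
Proof. intros E; f_equal; apply functional_extensionality; auto. Qed.

Lemma gamble_ind {X} (B : X -> bool) : gamble (ind B).
Proof. exists 1; intros x; unfold ind; destruct (B x); rewrite ?Rabs_R1, ?Rabs_R0; lra. Qed.

Lemma ind_ge0 {X} (B : X -> bool) x : 0 <= ind B x.
Proof. unfold ind; destruct (B x); lra. Qed.

Definition mkT {T : Type} (t0 t1 t2 t3 : T) (s : nat -> T) : nat -> T :=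
  fun j => match j with O => t0 | S O => t1 | S (S O) => t2 | S (S (S O)) => t3
           | S (S (S (S i))) => s i end.
Definition mk := @mkT R.

Lemma sum_mk t0 t1 t2 t3 s (u : nat -> R) n :
  sum_f_R0 (fun j => mk t0 t1 t2 t3 s j * u j) (S (S (S (S n)))) =
  t0 * u 0%nat + t1 * u 1%nat + t2 * u 2%nat + t3 * u 3%nat +
  sum_f_R0 (fun i => s i * u (S (S (S (S i))))) n.
Proof. rewrite sum_4. reflexivity. Qed.

Lemma sum_zero_mul (u : nat -> R) n : sum_f_R0 (fun i => 0 * u i) n = 0.
Proof. rewrite (sum_scal u 0). ring. Qed.

Lemma sum_nonneg (u : nat -> R) n : (forall i, (i <= n)%nat -> 0 <= u i) -> 0 <= sum_f_R0 u n.
Proof.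
  intros H. induction n; simpl; [apply H; lia|].
  assert (0 <= u (S n)) by (apply H; lia). assert (0 <= sum_f_R0 u n) by (apply IHn; intros; apply H; lia). lra.
Qed.

Section DirLe.
Context {Y1 Y2 : Type} (y1 : Y1) (y2 : Y2)
  (BB1 : (Y1 -> bool) -> Prop) (BB2 : (Y2 -> bool) -> Prop)
  (D1 : (Y1 -> R) -> Prop) (D2 : (Y2 -> R) -> Prop)
  (cD1 : coherent_D D1) (cD2 : coherent_D D2).

Lemma dir_le (f : Y1 -> R) (h : Y2 -> R) (g : Y1 -> R) mu :
  gamble f -> gamble h -> gamble g -> (forall x, 0 <= g x) ->
  prodD BB1 BB2 D1 D2 (fun z => (f (fst z) + g (fst z) * h (snd z) - mu) * ind whole z) ->
  mu <= low D1 (fun x => f x + g x * low D2 h).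
Proof.
  intros gf gh gg g0 [n [lam [fs [H1 H2]]]].
  set (e := low D2 h).
  set (phi0 := fun x => f x + g x * e).
  assert (gphi0 : gamble phi0) by (apply gamble_add; auto; apply gamble_mul; auto using gamble_const).
  assert (Hex : forall i, exists ab : (Y1 -> R) * (Y2 -> R),
    gamble (fst ab) /\ gamble (snd ab) /\ 0 <= low D1 (fst ab) /\ 0 <= low D2 (snd ab) /\
    ((i <= n)%nat -> forall z, snd ab (snd z) * fst ab (fst z) <= fs i z)).
  { intros i. destruct (Nat.le_gt_cases i n) as [hi|hi].
    - destruct (H1 i hi) as [_ [[[f2 [B1 [Hf2 [_ E]]]]|[f1 [B2 [Hf1 [_ E]]]]]|Hp]].
      + exists (ind B1, f2); simpl. repeat split; auto using gamble_ind.
        * apply (D_gamble D2 cD2); auto.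
        * apply (low_ge y1 D1 cD1); auto using gamble_ind, ind_ge0.
        * apply (low_Dpos y2 D2 cD2); auto.
        * intros _ z; rewrite E; lra.
      + exists (f1, ind B2); simpl. repeat split; auto using gamble_ind.
        * apply (D_gamble D1 cD1); auto.
        * apply (low_Dpos y1 D1 cD1); auto.
        * apply (low_ge y2 D2 cD2); auto using gamble_ind, ind_ge0.
        * intros _ z; rewrite E; lra.
      + exists (fun _ => 0, fun _ => 0); simpl. repeat split; auto using gamble_const.
        * rewrite (low_zero y1 D1 cD1); lra.
        * rewrite (low_zero y2 D2 cD2); lra.
        * intros _ z. destruct Hp as [[_ Hp] _]. rewrite Rmult_0_l. apply Hp.
    - exists (fun _ => 0, fun _ => 0); simpl. repeat split; auto using gamble_const.
      * rewrite (low_zero y1 D1 cD1); lra.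
      * rewrite (low_zero y2 D2 cD2); lra.
      * intros; lia. }
  set (a := fun i => fst (proj1_sig (constructive_indefinite_description _ (Hex i)))).
  set (b := fun i => snd (proj1_sig (constructive_indefinite_description _ (Hex i)))).
  assert (Hab : forall i, gamble (a i) /\ gamble (b i) /\ 0 <= low D1 (a i) /\ 0 <= low D2 (b i) /\
    ((i <= n)%nat -> forall z, b i (snd z) * a i (fst z) <= fs i z)).
  { intros i. unfold a, b. destruct (constructive_indefinite_description _ (Hex i)) as [ab Hp]. exact Hp. }
  set (v := mkT phi0 f g (fun _ => 1) a).
  assert (gv : forall j, gamble (v j)).
  { intros [|[|[|[|i]]]]; simpl; auto using gamble_const. apply Hab. }
  set (p := fun w : Y1 -> R => - low D1 (fun x => - w x)).
  assert (padd : forall a b, gamble a -> gamble b -> p (fun x => a x + b x) <= p a + p b).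
  { intros a0 b0 ga gb. unfold p.
    assert (H := low_superadd y1 D1 cD1 _ _ (gamble_opp _ ga) (gamble_opp _ gb)). cbv beta in H.
    rewrite (low_ext _ (fun x => - (a0 x + b0 x)) (fun x => - a0 x + - b0 x)) by (intros; ring). lra. }
  assert (phom : forall l a, 0 <= l -> gamble a -> p (fun x => l * a x) = l * p a).
  { intros l a0 hl ga. unfold p.
    rewrite (low_ext _ (fun x => - (l * a0 x)) (fun x => l * (- a0 x))) by (intros; ring).
    rewrite (low_hom y1 D1 cD1); auto using gamble_opp. ring. }
  assert (h0 : forall s, s * low D1 phi0 <= p (fun x => s * v 0%nat x)).
  { intros s. simpl. destruct (Rle_or_lt 0 s) as [hs|hs].
    - rewrite phom; auto. unfold p.
      assert (H := low_superadd y1 D1 cD1 _ _ gphi0 (gamble_opp _ gphi0)). cbv beta in H.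
      rewrite (low_ext _ (fun x => phi0 x + - phi0 x) (fun _ => 0)) in H by (intros; ring).
      rewrite (low_zero y1 D1 cD1) in H.
      assert (s * (low D1 phi0 + low D1 (fun x => - phi0 x)) <= s * 0) by (apply Rmult_le_compat_l; lra).
      lra.
    - unfold p. rewrite (low_ext _ (fun x => - (s * phi0 x)) (fun x => (- s) * phi0 x)) by (intros; ring).
      rewrite (low_hom y1 D1 cD1); auto; lra. }
  destruct (HB p padd phom v gv (low D1 phi0) h0 (S (S (S (S n))))) as [q [hq0 Hq]].
  assert (gw : forall t, gamble (fun x => sum_f_R0 (fun j => t j * v j x) (S (S (S (S n)))))).
  { intros t; apply (gamble_sum (fun j x => t j * v j x)); intros; apply gamble_scal; auto. }
  assert (Qlow : forall t, low D1 (fun x => sum_f_R0 (fun j => t j * v j x) (S (S (S (S n)))))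
                 <= sum_f_R0 (fun j => t j * q j) (S (S (S (S n))))).
  { intros t. specialize (Hq (fun j => - t j)). unfold p in Hq.
    rewrite (sum_ext _ (fun j => - (t j * q j))) in Hq by (intros; ring).
    rewrite sum_opp in Hq.
    rewrite (low_ext _ _ (fun x => sum_f_R0 (fun j => t j * v j x) (S (S (S (S n)))))) in Hq.
    - lra.
    - intros x. rewrite (sum_ext _ (fun j => - (t j * v j x))) by (intros; ring).
      rewrite sum_opp; ring. }
  assert (Qmk : forall t0 t1 t2 t3 s,
    low D1 (fun x => t0 * phi0 x + t1 * f x + t2 * g x + t3 * 1 + sum_f_R0 (fun i => s i * a i x) n)
    <= t0 * q 0%nat + t1 * q 1%nat + t2 * q 2%nat + t3 * q 3%nat +
       sum_f_R0 (fun i => s i * q (S (S (S (S i))))) n).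
  { intros t0 t1 t2 t3 s. specialize (Qlow (mk t0 t1 t2 t3 s)).
    unfold mk in Qlow. rewrite sum_mk in Qlow.
    rewrite (low_ext _ _ (fun x => t0 * phi0 x + t1 * f x + t2 * g x + t3 * 1 + sum_f_R0 (fun i => s i * a i x) n)) in Qlow.
    - exact Qlow.
    - intros x. rewrite sum_mk. reflexivity. }
  assert (Hqa : forall i, (i <= n)%nat -> 0 <= q (S (S (S (S i))))).
  { intros i hi. specialize (Qmk 0 0 0 0 (fun k => if Nat.eqb k i then 1 else 0)). cbv beta in Qmk.
    rewrite (sum_delta (fun k => q (S (S (S (S k)))))) in Qmk by auto.
    rewrite (low_ext _ _ (a i)) in Qmk.
    - destruct (Hab i) as [_ [_ [H _]]]. lra.
    - intros x. rewrite (sum_delta (fun k => a k x)) by auto. ring. }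
  assert (Hq2 : 0 <= q 2%nat).
  { specialize (Qmk 0 0 1 0 (fun _ => 0)). cbv beta in Qmk. rewrite sum_zero_mul in Qmk.
    rewrite (low_ext _ _ g) in Qmk.
    - assert (0 <= low D1 g) by (apply (low_ge y1 D1 cD1); auto). lra.
    - intros x; rewrite sum_zero_mul; ring. }
  assert (Hq3 : q 3%nat = 1).
  { assert (Qa := Qmk 0 0 0 1 (fun _ => 0)). assert (Qb := Qmk 0 0 0 (-1) (fun _ => 0)). cbv beta in Qa, Qb.
    rewrite sum_zero_mul in Qa, Qb.
    rewrite (low_ext _ _ (fun _ => 1)) in Qa by (intros; rewrite sum_zero_mul; ring).
    rewrite (low_ext _ _ (fun _ => -1)) in Qb by (intros; rewrite sum_zero_mul; ring).
    assert (1 <= low D1 (fun _ => 1)) by (apply (low_ge y1 D1 cD1); auto using gamble_const; intros; lra).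
    assert (-1 <= low D1 (fun _ => -1)) by (apply (low_ge y1 D1 cD1); auto using gamble_const; intros; lra).
    lra. }
  assert (Hq0 : q 0%nat = q 1%nat + e * q 2%nat).
  { assert (Qa := Qmk 1 (-1) (-e) 0 (fun _ => 0)). assert (Qb := Qmk (-1) 1 e 0 (fun _ => 0)). cbv beta in Qa, Qb.
    rewrite sum_zero_mul in Qa, Qb.
    rewrite (low_ext _ _ (fun _ => 0)) in Qa by (intros; rewrite sum_zero_mul; unfold phi0; ring).
    rewrite (low_ext _ _ (fun _ => 0)) in Qb by (intros; rewrite sum_zero_mul; unfold phi0; ring).
    rewrite (low_zero y1 D1 cD1) in Qa, Qb. lra. }
  set (beta := fun y => sum_f_R0 (fun i => (lam i * q (S (S (S (S i))))) * b i y) n).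
  assert (Hbeta : forall y, beta y <= q 1%nat + q 2%nat * h y - mu).
  { intros y. specialize (Qmk 0 1 (h y) (- mu) (fun i => - (lam i * b i y))). cbv beta in Qmk.
    rewrite (sum_ext _ (fun i => - ((lam i * q (S (S (S (S i))))) * b i y))) in Qmk by (intros; ring).
    rewrite sum_opp in Qmk. fold (beta y) in Qmk.
    assert (0 <= low D1 (fun x => 0 * phi0 x + 1 * f x + h y * g x + - mu * 1 +
                     sum_f_R0 (fun i => - (lam i * b i y) * a i x) n)).
    { apply (low_ge y1 D1 cD1).
      - apply (gamble_ext (fun x => sum_f_R0 (fun j => mk 0 1 (h y) (-mu) (fun i => - (lam i * b i y)) j * v j x) (S (S (S (S n)))))); auto.
        intros x; unfold mk; rewrite sum_mk; reflexivity.
      - intros x. specialize (H2 (x, y)). simpl in H2. rewrite ind_whole in H2.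
        assert (sum_f_R0 (fun i => lam i * (b i y * a i x)) n <= sum_f_R0 (fun i => lam i * fs i (x, y)) n).
        { apply sum_Rle; intros i hi. apply Rmult_le_compat_l; [destruct (H1 i hi); lra|].
          destruct (Hab i) as [_ [_ [_ [_ H]]]]. apply (H hi (x, y)). }
        rewrite (sum_ext _ (fun i => - (lam i * (b i y * a i x)))) by (intros; ring).
        rewrite sum_opp. lra. }
    rewrite Hq3 in Qmk. lra. }
  assert (gb : forall i, gamble (fun y => (lam i * q (S (S (S (S i))))) * b i y)).
  { intros i; apply gamble_scal, Hab. }
  assert (gbeta : gamble beta) by (apply (gamble_sum (fun i y => (lam i * q (S (S (S (S i))))) * b i y)); auto).
  assert (Lbeta : 0 <= low D2 beta).
  { eapply Rle_trans; [|apply (low_sum y2 D2 cD2 (fun i y => (lam i * q (S (S (S (S i))))) * b i y)); auto].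
    apply sum_nonneg. intros i hi. rewrite (low_hom y2 D2 cD2); [| |apply Hab].
    - apply Rmult_le_pos; [apply Rmult_le_pos; [destruct (H1 i hi); lra|apply Hqa; auto]|apply Hab].
    - apply Rmult_le_pos; [destruct (H1 i hi); lra|apply Hqa; auto]. }
  assert (Lmain : low D2 (fun y => beta y + (mu - q 1%nat)) <= low D2 (fun y => q 2%nat * h y)).
  { apply (low_mono y2 D2 cD2); [apply gamble_scal; auto|apply gamble_add; auto using gamble_const|].
    intros y; specialize (Hbeta y); lra. }
  rewrite (low_const_add y2 D2 cD2) in Lmain by auto.
  rewrite (low_hom y2 D2 cD2) in Lmain by auto. fold e in Lmain.
  fold phi0. rewrite <- hq0, Hq0. nra.
Qed.
End DirLe.


Lemma gamble_fst {Y1 Y2} (a : Y1 -> R) : gamble a -> gamble (fun z : Y1 * Y2 => a (fst z)).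
Proof. intros [M H]; exists M; intros; apply H. Qed.
Lemma gamble_snd {Y1 Y2} (a : Y2 -> R) : gamble a -> gamble (fun z : Y1 * Y2 => a (snd z)).
Proof. intros [M H]; exists M; intros; apply H. Qed.

Section DirGe.
Context {Y1 Y2 : Type} (y1 : Y1) (y2 : Y2)
  (BB1 : (Y1 -> bool) -> Prop) (BB2 : (Y2 -> bool) -> Prop)
  (D1 : (Y1 -> R) -> Prop) (D2 : (Y2 -> R) -> Prop)
  (cD1 : coherent_D D1) (cD2 : coherent_D D2).

Lemma dir_ge (f : Y1 -> R) (h : Y2 -> R) (g : Y1 -> R) mu mu' :
  gamble f -> gamble h -> measurable_g BB1 g ->
  D1 (fun x => f x + g x * low D2 h - mu) -> mu' < mu ->
  prodD BB1 BB2 D1 D2 (fun z => (f (fst z) + g (fst z) * h (snd z) - mu') * ind whole z).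
Proof.
  intros gf gh [[gg g0] [gs [Hgs Hconv]]] Hphi hmu.
  set (e := low D2 h).
  destruct (gamble_bound h gh) as [Mh [hMh Hh]].
  destruct (gamble_bound g gg) as [Mg [hMg Hg]].
  assert (he1 : - Mh <= e).
  { apply (low_ge y2 D2 cD2); auto. intros y; specialize (Hh y).
    pose proof (Rle_abs (- h y)); rewrite Rabs_Ropp in *; lra. }
  assert (he2 : e <= Mh).
  { apply (low_ub y2 D2 cD2); auto. intros y; specialize (Hh y). pose proof (Rle_abs (h y)); lra. }
  set (eta := mu - mu').
  assert (heta : 0 < eta) by (unfold eta; lra).
  set (eps := eta / (8 * (Mh + 1))).
  assert (heps : 0 < eps) by (unfold eps; apply Rdiv_lt_0_compat; lra).
  assert (heps2 : eps * (8 * (Mh + 1)) = eta) by (unfold eps; field; lra).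
  destruct (Hconv eps heps) as [N HN].
  set (gm := gs N).
  assert (Hgm : forall x, Rabs (g x - gm x) <= eps) by (intros; apply HN; lia).
  destruct (Hgs N) as [[ggm gm0] [c0 [n [c [Bs [hc0 [Hc Egm]]]]]]].
  fold gm in ggm, gm0, Egm.
  set (del := eta / (4 * (Mg + eps + 1))).
  assert (hdel : 0 < del) by (unfold del; apply Rdiv_lt_0_compat; lra).
  assert (hdel2 : del * (4 * (Mg + eps + 1)) = eta) by (unfold del; field; lra).
  set (H := fun y => h y - (e - del)).
  assert (HD2 : D2 H) by (unfold H; apply (low_D y2 D2 cD2 h (e - del)); auto; unfold e; lra).
  assert (gH : gamble H) by (apply gamble_sub; auto using gamble_const).
  set (L := fun z : Y1 * Y2 => (f (fst z) + g (fst z) * e - mu) * ind whole (snd z)).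
  set (T := fun z : Y1 * Y2 => (f (fst z) + g (fst z) * h (snd z) - mu') * ind whole z).
  set (Rz := fun z : Y1 * Y2 => T z - L z - gm (fst z) * H (snd z)).
  set (Apr := fun F : Y1 * Y2 -> R => (A12 BB1 D2 F \/ A21 BB2 D1 F) \/ gamble_gt0 F).
  assert (PL : posi Apr L).
  { apply posi_single. left; right. exists (fun x => f x + g x * e - mu), whole.
    repeat split; auto. }
  assert (Rlow : forall z, eta / 2 <= Rz z).
  { intros [x y]. unfold Rz, T, L, H; simpl. rewrite !ind_whole.
    specialize (Hgm x). specialize (Hh y). specialize (Hg x). specialize (gm0 x).
    assert (hgm : gm x <= Mg + eps).
    { pose proof (Rle_abs (g x)). pose proof (Rle_abs (- (g x - gm x))). rewrite Rabs_Ropp in *. lra. }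
    assert (hprod : - (eps * (2 * Mh)) <= (g x - gm x) * (h y - e)).
    { assert (Rabs ((g x - gm x) * (h y - e)) <= eps * (2 * Mh)).
      { rewrite Rabs_mult. apply Rmult_le_compat; try apply Rabs_pos; auto.
        eapply Rle_trans; [apply Rabs_triang|]. rewrite Rabs_Ropp.
        assert (Rabs e <= Mh) by (apply Rabs_le; lra). lra. }
      pose proof (Rle_abs (- ((g x - gm x) * (h y - e)))). rewrite Rabs_Ropp in *. lra. }
    assert (eps * (2 * Mh) <= eta / 4) by nra.
    assert (del * gm x <= eta / 4) by nra.
    unfold eta in *. nra. }
  assert (gR : gamble Rz).
  { unfold Rz, T, L. apply gamble_sub; [apply gamble_sub|].
    - apply gamble_mul; [|apply gamble_ind].
      apply gamble_sub; auto using gamble_const.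
      apply gamble_add; [apply (gamble_fst (Y2:=Y2) f); auto|apply gamble_mul; [apply (gamble_fst (Y2:=Y2) g)|apply (gamble_snd (Y1:=Y1) h)]; auto].
    - apply gamble_mul; [|apply gamble_snd; apply gamble_ind].
      apply (gamble_fst (Y2:=Y2) (fun x => f x + g x * e - mu)). apply gamble_sub; auto using gamble_const.
      apply gamble_add; auto. apply gamble_mul; auto using gamble_const.
    - apply gamble_mul; [apply (gamble_fst (Y2:=Y2) gm)|apply (gamble_snd (Y1:=Y1) H)]; auto. }
  assert (PR : posi Apr (fun z => L z + Rz z)).
  { apply posi_add; auto. apply posi_single. right.
    apply (gt0_of_pos (y1, y2) _ (eta / 2)); auto; lra. }
  assert (P3 : posi Apr (fun z => (L z + Rz z) + c0 * (H (snd z) * ind whole (fst z)))).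
  { apply posi_add_nonneg; auto. left; left. exists H, whole. repeat split; auto. }
  set (Tk := fun k (z : Y1 * Y2) => if Nat.eqb k 0 then 0 else c k * (H (snd z) * ind (Bs k) (fst z))).
  assert (P4 := posi_add_terms Apr _ Tk n P3).
  refine (posi_ext Apr _ _ (P4 _) _).
  - intros k hk. unfold Tk. destruct (Nat.eqb_spec k 0) as [->|hk0].
    + left; intros; reflexivity.
    + right. destruct (Hc k ltac:(lia)) as [hck HB].
      exists (c k), (fun z => H (snd z) * ind (Bs k) (fst z)). repeat split; auto.
      left; left. exists H, (Bs k). repeat split; auto.
  - intros [x y]. cbv beta. unfold Rz. simpl fst; simpl snd. rewrite ind_whole.
    assert (Es : sum_f_R0 (fun k => Tk k (x, y)) n =
                 H y * sum_f_R0 (fun k => if Nat.eqb k 0 then 0 else c k * ind (Bs k) x) n).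
    { rewrite scal_sum. apply sum_ext; intros k. unfold Tk; simpl. destruct (Nat.eqb k 0); ring. }
    rewrite Es, (Egm x). fold T. ring.
Qed.
End DirGe.


Lemma case1 {Y1 Y2 : Type} (y1 : Y1) (y2 : Y2)
  (BB1 : (Y1 -> bool) -> Prop) (BB2 : (Y2 -> bool) -> Prop)
  (D1 : (Y1 -> R) -> Prop) (D2 : (Y2 -> R) -> Prop)
  (cD1 : coherent_D D1) (cD2 : coherent_D D2) (f : Y1 -> R) (h : Y2 -> R) (g : Y1 -> R) :
  gamble f -> gamble h -> measurable_g BB1 g ->
  lowP_D (prodD BB1 BB2 D1 D2) (fun z => f (fst z) + g (fst z) * h (snd z)) whole
  = lowP_D D1 (fun x => f x + g x * real (lowP_D D2 h whole)) whole.
Proof.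
  intros gf gh mg.
  assert (gg : gamble g) by (destruct mg as [[gg _] _]; auto).
  assert (g0 : forall x, 0 <= g x) by (destruct mg as [[_ g0] _]; auto).
  assert (gphi : gamble (fun x => f x + g x * low D2 h)).
  { apply gamble_add; auto. apply gamble_mul; auto using gamble_const. }
  rewrite (lowP_eq D1). unfold lowP_D at 1.
  apply Rbar_le_antisym; apply lub_mono.
  - intros mu Hmu mu' hmu'.
    assert (H := dir_le y1 y2 BB1 BB2 D1 D2 cD1 cD2 f h g mu gf gh gg g0 Hmu).
    apply (low_D y1 D1 cD1 (fun x => f x + g x * low D2 h) mu' gphi). lra.
  - intros mu Hmu mu' hmu'.
    exact (dir_ge y1 y2 BB1 BB2 D1 D2 cD2 f h g mu mu' gf gh mg Hmu hmu').
Qed.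

Lemma prodD_swap {Y1 Y2 : Type} (BB1 : (Y1 -> bool) -> Prop) (BB2 : (Y2 -> bool) -> Prop)
  (D1 : (Y1 -> R) -> Prop) (D2 : (Y2 -> R) -> Prop) (F : Y1 * Y2 -> R) :
  prodD BB1 BB2 D1 D2 F -> prodD BB2 BB1 D2 D1 (fun z => F (snd z, fst z)).
Proof.
  intros [n [lam [fs [H1 H2]]]].
  exists n, lam, (fun i z => fs i (snd z, fst z)). split.
  - intros i hi. destruct (H1 i hi) as [hl [[[f2 [B1 [Hf2 [HB E]]]]|[f1 [B2 [Hf1 [HB E]]]]]|Hp]].
    + split; auto. left; right. exists f2, B1. repeat split; auto. rewrite E. reflexivity.
    + split; auto. left; left. exists f1, B2. repeat split; auto. rewrite E. reflexivity.
    + split; auto. right. destruct Hp as [[[M HM] Hge] [[a b] Hz]]. split; [split|].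
      * exists M; intros; apply HM.
      * intros; apply Hge.
      * exists (b, a); auto.
  - intros z. apply H2.
Qed.

Theorem theorem21 (X1 X2 : Type) (x1 : X1) (x2 : X2)
  (BB1 : (X1 -> bool) -> Prop) (BB2 : (X2 -> bool) -> Prop)
  (hBB1 : forall B, BB1 B -> nonempty_ev B) (hBB2 : forall B, BB2 B -> nonempty_ev B)
  (C1 : (X1 -> R) -> (X1 -> bool) -> Prop) (P1 : (X1 -> R) -> (X1 -> bool) -> Rbar)
  (C2 : (X2 -> R) -> (X2 -> bool) -> Prop) (P2 : (X2 -> R) -> (X2 -> bool) -> Rbar)
  (hC1 : domain_ok C1) (hC2 : domain_ok C2)
  (hP1 : coherent_lp C1 P1) (hP2 : coherent_lp C2 P2) :
  (* case i = 1, j = 2 *)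
  (forall (f : X1 -> R) (h : X2 -> R) (g : X1 -> R),
     gamble f -> gamble h -> measurable_g BB1 g ->
     prodP BB1 BB2 C1 P1 C2 P2
       (fun z => f (fst z) + g (fst z) * h (snd z)) whole
     = natext C1 P1 (fun x => f x + g x * real (natext C2 P2 h whole)) whole)
  /\
  (* case i = 2, j = 1 *)
  (forall (f : X2 -> R) (h : X1 -> R) (g : X2 -> R),
     gamble f -> gamble h -> measurable_g BB2 g ->
     prodP BB1 BB2 C1 P1 C2 P2
       (fun z => f (snd z) + g (snd z) * h (fst z)) whole
     = natext C2 P2 (fun x => f x + g x * real (natext C1 P1 h whole)) whole).
Proof.
  assert (cD1 := EP_coherent x1 C1 P1 hC1 hP1).
  assert (cD2 := EP_coherent x2 C2 P2 hC2 hP2).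
  split.
  - intros f h g gf gh mg. unfold prodP, natext.
    apply (case1 x1 x2); auto.
  - intros f h g gf gh mg. unfold prodP, natext.
    rewrite <- (case1 x2 x1 BB2 BB1 (EP C2 P2) (EP C1 P1) cD2 cD1 f h g gf gh mg).
    unfold lowP_D. f_equal. apply functional_extensionality; intros mu.
    apply propositional_extensionality; split; intros H.
    + exact (prodD_swap _ _ _ _ _ H).
    + apply prodD_swap in H. exact H.
Qed.
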